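(* Let $\mathcal{C}$ be a path category and let $\mathcal{D}$ be a class of display maps with weak (respectively strong) homotopy $\Pi$-types in $\mathcal{C}$. Let $\mathcal{I}$ be the class of isomorphisms in $\mathcal{C}$. Then $\mathcal{D} \cup \mathcal{I}$ is also a class of display maps with weak (respectively strong) homotopy $\Pi$-types.
   Context: A path category is a category with two classes of maps, fibrations and weak equivalences, such that: fibrations are closed under composition and contain the isomorphisms; pullbacks of fibrations along arbitrary maps exist and are fibrations; there is a terminal object and every map to it is a fibration; isomorphisms are weak equivalences; weak equivalences satisfy 2-out-of-6; every object $X$ has a path object, a factorisation of the diagonal as a weak equivalence $X \to PX$ followed by a fibration $(s,t): PX \to X\times X$; pullbacks of trivial fibrations are trivial fibrations; every trivial fibration has a section. For a fibration $p: Y \to A$ one similarly factors $Y \to Y\times_A Y$ to get a fibrewise path object $P_A Y$, and two maps $m, m': D \to Y$ over $A$ are fibrewise homotopic ($m \simeq_A m'$) if there is $H: D \to P_A Y$ with $(s,t)H = (m,m')$. Homotopy $\Pi$-types: given fibrations $g: C \to B$ and $f: B \to A$, a weak homotopy $\Pi$-type $\Pi_f(g)$ is a fibration $\pi: \Pi \to A$ with a map $\varepsilon: \Pi\times_A B \to C$ satisfying $g\varepsilon = $ the projection to $B$, such that for every map $h: D \to A$ and every $m: D\times_A B \to C$ with $gm$ equal to the projection to $B$, there is $k: D \to \Pi$ with $\pi k = h$ and $\varepsilon\circ(k\times_A B) \simeq_B m$; it is strong if moreover for any $k, k': D \to \Pi$ over $A$ with $\varepsilon(k\times_A B) \simeq_B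 \varepsilon(k'\times_A B)$ we have $k \simeq_A k'$. A class $\mathcal{D}$ of fibrations is a class of display maps with weak (strong) homotopy $\Pi$-types if: every identity map lies in $\mathcal{D}$; the pullback of a map in $\mathcal{D}$ along any map can be found in $\mathcal{D}$ (some pullback lies in $\mathcal{D}$); and for all composable $d: X \to I$, $e: I \to J$ in $\mathcal{D}$ a weak (strong) homotopy $\Pi$-type $\Pi_e(d)$ exists and can be found in $\mathcal{D}$. *)

(* Defs.v *)
Set Implicit Arguments.
Unset Strict Implicit.

Record Category := {
  Ob :> Type;
  Hom : Ob -> Ob -> Type;
  idm : forall X, Hom X X;
  comp : forall X Y Z, Hom Y Z -> Hom X Y -> Hom X Z;
  comp_assoc : forall X Y Z W (f : Hom X Y) (g : Hom Y Z) (h : Hom Z W),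
      comp h (comp g f) = comp (comp h g) f;
  comp_id_l : forall X Y (f : Hom X Y), comp (idm Y) f = f;
  comp_id_r : forall X Y (f : Hom X Y), comp f (idm X) = f
}.

Arguments Hom {c} X Y.
Arguments idm {c} X.
Arguments comp {c X Y Z} g f.
Infix "∘" := comp (at level 40, left associativity).

Definition MapClass (C : Category) := forall X Y : C, Hom X Y -> Prop.

Section CatDefs.
Context {C : Category}.

Definition is_iso {X Y : C} (f : Hom X Y) : Prop :=
  exists g : Hom Y X, g ∘ f = idm X /\ f ∘ g = idm Y.

Definition is_terminal (T : C) : Prop :=
  forall X : C, exists! h : Hom X T, True.

(** (P, p1, p2) is a pullback of f : B -> A and g : E -> A;
    p2 : P -> E is "the pullback of f along g". *)
Definition is_pullback {A B E P : C} (f : Hom B A) (g : Hom E A)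
  (p1 : Hom P B) (p2 : Hom P E) : Prop :=
  f ∘ p1 = g ∘ p2 /\
  forall (D : C) (u : Hom D B) (v : Hom D E), f ∘ u = g ∘ v ->
    exists! h : Hom D P, p1 ∘ h = u /\ p2 ∘ h = v.

Definition is_product {X Y P : C} (p1 : Hom P X) (p2 : Hom P Y) : Prop :=
  forall (D : C) (u : Hom D X) (v : Hom D Y),
    exists! h : Hom D P, p1 ∘ h = u /\ p2 ∘ h = v.

End CatDefs.

Definition is_path_category (C : Category) (Fib Weq : MapClass C) : Prop :=
  (forall (X Y Z : C) (f : Hom X Y) (g : Hom Y Z), Fib _ _ f -> Fib _ _ g -> Fib _ _ (g ∘ f)) /\
  (forall (X Y : C) (f : Hom X Y), is_iso f -> Fib _ _ f) /\
  (forall (A B E : C) (f : Hom B A) (g : Hom E A), Fib _ _ f ->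
     exists (P : C) (p1 : Hom P B) (p2 : Hom P E), is_pullback f g p1 p2) /\
  (forall (A B E P : C) (f : Hom B A) (g : Hom E A) (p1 : Hom P B) (p2 : Hom P E),
     Fib _ _ f -> is_pullback f g p1 p2 -> Fib _ _ p2) /\
  (exists T : C, is_terminal T /\ forall (X : C) (h : Hom X T), Fib _ _ h) /\
  (forall (X Y : C) (f : Hom X Y), is_iso f -> Weq _ _ f) /\
  (forall (A B E D : C) (f : Hom A B) (g : Hom B E) (h : Hom E D),
     Weq _ _ (g ∘ f) -> Weq _ _ (h ∘ g) ->
     Weq _ _ f /\ Weq _ _ g /\ Weq _ _ h /\ Weq _ _ (h ∘ g ∘ f)) /\
  (forall X : C, exists (XX : C) (pr1 pr2 : Hom XX X) (PX : C)
       (r : Hom X PX) (st : Hom PX XX),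
     is_product pr1 pr2 /\ Weq _ _ r /\ Fib _ _ st /\
     pr1 ∘ st ∘ r = idm X /\ pr2 ∘ st ∘ r = idm X) /\
  (forall (A B E P : C) (f : Hom B A) (g : Hom E A) (p1 : Hom P B) (p2 : Hom P E),
     Fib _ _ f -> Weq _ _ f -> is_pullback f g p1 p2 -> Fib _ _ p2 /\ Weq _ _ p2) /\
  (forall (X Y : C) (f : Hom X Y), Fib _ _ f -> Weq _ _ f ->
     exists s : Hom Y X, f ∘ s = idm Y).

Unset Implicit Arguments.
Section PiDefs.
Context {C : Category} (Fib Weq : MapClass C).

(** Fibrewise homotopy m ≃_A m' for maps m m' : D -> Y over p : Y -> A:
    there is a fibrewise path object Y -> P_A Y -> Y ×_A Y (a weak
    equivalence followed by a fibration factoring the diagonal) and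
    H : D -> P_A Y with (s,t) H = (m, m'). *)
Definition fhtpy {Y A D : C} (p : Hom Y A) (m m' : Hom D Y) : Prop :=
  exists (YY : C) (y1 y2 : Hom YY Y) (PY : C) (r : Hom Y PY) (st : Hom PY YY)
         (H : Hom D PY),
    is_pullback p p y1 y2 /\ Weq _ _ r /\ Fib _ _ st /\
    y1 ∘ st ∘ r = idm Y /\ y2 ∘ st ∘ r = idm Y /\
    y1 ∘ st ∘ H = m /\ y2 ∘ st ∘ H = m'.

(** Weak homotopy Pi-type Pi_f(g) for g : E -> B, f : B -> A:
    pi : Pi -> A, a pullback (PB, q1 : PB -> Pi, q2 : PB -> B) of pi and f
    (i.e. PB = Pi ×_A B), and eps : PB -> E with g eps = q2. *)
Definition weak_Pi {A B E Pi PB : C} (f : Hom B A) (g : Hom E B)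
  (pi : Hom Pi A) (q1 : Hom PB Pi) (q2 : Hom PB B) (eps : Hom PB E) : Prop :=
  Fib _ _ pi /\ is_pullback pi f q1 q2 /\ g ∘ eps = q2 /\
  forall (D : C) (h : Hom D A) (DB : C) (d1 : Hom DB D) (d2 : Hom DB B),
    is_pullback h f d1 d2 ->
    forall m : Hom DB E, g ∘ m = d2 ->
      exists k : Hom D Pi, pi ∘ k = h /\
        forall kB : Hom DB PB, q1 ∘ kB = k ∘ d1 -> q2 ∘ kB = d2 ->
          fhtpy g (eps ∘ kB) m.

Definition strong_Pi {A B E Pi PB : C} (f : Hom B A) (g : Hom E B)
  (pi : Hom Pi A) (q1 : Hom PB Pi) (q2 : Hom PB B) (eps : Hom PB E) : Prop :=
  weak_Pi f g pi q1 q2 eps /\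
  forall (D : C) (h : Hom D A) (DB : C) (d1 : Hom DB D) (d2 : Hom DB B),
    is_pullback h f d1 d2 ->
    forall k k' : Hom D Pi, pi ∘ k = h -> pi ∘ k' = h ->
    forall kB kB' : Hom DB PB,
      q1 ∘ kB = k ∘ d1 -> q2 ∘ kB = d2 ->
      q1 ∘ kB' = k' ∘ d1 -> q2 ∘ kB' = d2 ->
      fhtpy g (eps ∘ kB) (eps ∘ kB') -> fhtpy pi k k'.

Definition homotopy_Pi (strong : bool) {A B E Pi PB : C} (f : Hom B A)
  (g : Hom E B) (pi : Hom Pi A) (q1 : Hom PB Pi) (q2 : Hom PB B)
  (eps : Hom PB E) : Prop :=
  if strong then strong_Pi f g pi q1 q2 eps else weak_Pi f g pi q1 q2 eps.

Definition display_class (strong : bool) (Dm : MapClass C) : Prop :=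
  (forall (X Y : C) (d : Hom X Y), Dm _ _ d -> Fib _ _ d) /\
  (forall X : C, Dm _ _ (idm X)) /\
  (forall (I X J : C) (d : Hom X I) (u : Hom J I), Dm _ _ d ->
     exists (P : C) (p1 : Hom P X) (p2 : Hom P J),
       is_pullback d u p1 p2 /\ Dm _ _ p2) /\
  (forall (X I J : C) (d : Hom X I) (e : Hom I J), Dm _ _ d -> Dm _ _ e ->
     exists (Pi PB : C) (pi : Hom Pi J) (q1 : Hom PB Pi) (q2 : Hom PB I)
            (eps : Hom PB X),
       homotopy_Pi strong e d pi q1 q2 eps /\ Dm _ _ pi).

End PiDefs.

(* Main.v *)
Require Import Defs.

Ltac ra := repeat rewrite <- comp_assoc.
Ltac la := repeat rewrite comp_assoc.

Section S.
Context (C : Category) (Fib Weq : MapClass C) (HC : is_path_category Fib Weq).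

Lemma iso_pb {A B E P : C} (f : Hom B A) (g : Hom E A) (p1 : Hom P B) (p2 : Hom P E) :
  is_pullback f g p1 p2 -> is_iso g -> is_iso p1.
Proof.
  intros [Hc Hu] [gi [Hg1 Hg2]].
  destruct (Hu B (idm B) (gi ∘ f)) as [h [[H1 H2] _]].
  { rewrite comp_id_r, comp_assoc, Hg2, comp_id_l. reflexivity. }
  exists h. split; [|exact H1].
  destruct (Hu P p1 p2 Hc) as [x [_ Hx]].
  transitivity x; [symmetry|]; apply Hx; split.
  - rewrite comp_assoc, H1, comp_id_l; reflexivity.
  - rewrite comp_assoc, H2, <- comp_assoc, Hc, comp_assoc, Hg1, comp_id_l; reflexivity.
  - apply comp_id_r.
  - apply comp_id_r.
Qed.

Lemma iso_mono {X Y Z : C} (f : Hom Y Z) (u v : Hom X Y) : is_iso f -> f ∘ u = f ∘ v -> u = v.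
Proof.
  intros [fi [H1 _]] E.
  rewrite <- (comp_id_l u), <- (comp_id_l v), <- H1, <- !comp_assoc, E. reflexivity.
Qed.

Lemma weq_iso_r {X Y Z : C} (r : Hom Y Z) (p : Hom X Y) : Weq _ _ r -> is_iso p -> Weq _ _ (r ∘ p).
Proof.
  intros Hr [pi [H1 H2]].
  destruct HC as (_&_&_&_&_&Hiw&H26&_).
  edestruct (H26 _ _ _ _ p pi (r ∘ p)) as (_&_&Hh&_).
  - rewrite H1. apply Hiw. exists (idm _). split; apply comp_id_l.
  - rewrite <- comp_assoc, H2, comp_id_r. exact Hr.
  - exact Hh.
Qed.

Lemma fhtpy_refl_iso {Y A D : C} (p : Hom Y A) (m : Hom D Y) : is_iso p -> fhtpy Fib Weq p m m.
Proof.
  intros Hp.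
  destruct HC as (_&Hfi&_&_&_&Hiw&_).
  assert (Hid : forall X : C, is_iso (idm X)) by (intro X; exists (idm X); split; apply comp_id_l).
  exists Y, (idm Y), (idm Y), Y, (idm Y), (idm Y), m.
  repeat split; try (rewrite ?comp_id_l; reflexivity); auto.
  intros D' u v E. apply iso_mono in E; auto. subst v.
  exists u. split. split; apply comp_id_l.
  intros x [Hx _]. rewrite comp_id_l in Hx. symmetry; exact Hx.
Qed.

Lemma fhtpy_pre {Y A D D' : C} (p : Hom Y A) (a b : Hom D Y) (f : Hom D' D) :
  fhtpy Fib Weq p a b -> fhtpy Fib Weq p (a ∘ f) (b ∘ f).
Proof.
  intros (YY&y1&y2&PY&r&st&H&Hpb&Hr&Hst&E1&E2&E3&E4).
  exists YY, y1, y2, PY, r, st, (H ∘ f).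
  refine (conj Hpb (conj Hr (conj Hst (conj E1 (conj E2 (conj _ _)))))).
  - rewrite comp_assoc, E3; reflexivity.
  - rewrite comp_assoc, E4; reflexivity.
Qed.

Lemma fhtpy_refl {Y A D D' : C} (p : Hom Y A) (a b : Hom D Y) (m : Hom D' Y) :
  fhtpy Fib Weq p a b -> fhtpy Fib Weq p m m.
Proof.
  intros (YY&y1&y2&PY&r&st&H&Hpb&Hr&Hst&E1&E2&E3&E4).
  exists YY, y1, y2, PY, r, st, (r ∘ m).
  refine (conj Hpb (conj Hr (conj Hst (conj E1 (conj E2 (conj _ _)))))).
  - rewrite comp_assoc, E1; apply comp_id_l.
  - rewrite comp_assoc, E2; apply comp_id_l.
Qed.

Lemma fhtpy_transport {X I P J D : C} (d : Hom X I) (p : Hom P J) (phi : Hom P X)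
  (phii : Hom X P) (psi : Hom I J) (a b : Hom D X) :
  phii ∘ phi = idm P -> phi ∘ phii = idm X -> is_iso psi -> p = psi ∘ d ∘ phi ->
  fhtpy Fib Weq d a b -> fhtpy Fib Weq p (phii ∘ a) (phii ∘ b).
Proof.
  intros Hp1 Hp2 Hpsi Ep (YY&y1&y2&PY&r&st&H&[Hc Hu]&Hr&Hst&E1&E2&E3&E4).
  exists YY, (phii ∘ y1), (phii ∘ y2), PY, (r ∘ phi), st, H.
  assert (K : forall (Z : C) (z : Hom Z X), phi ∘ (phii ∘ z) = z).
  { intros Z z. rewrite comp_assoc, Hp2. apply comp_id_l. }
  assert (K' : forall (Z : C) (z : Hom Z P), phii ∘ (phi ∘ z) = z).
  { intros Z z. rewrite comp_assoc, Hp1. apply comp_id_l. }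
  refine (conj (conj _ _) (conj _ (conj Hst (conj _ (conj _ (conj _ _)))))).
  - subst p. ra. rewrite !K, Hc. reflexivity.
  - intros D0 u v E. subst p.
    assert (E' : d ∘ (phi ∘ u) = d ∘ (phi ∘ v)).
    { apply (iso_mono psi); auto. ra. repeat rewrite <- comp_assoc in E. exact E. }
    destruct (Hu _ _ _ E') as [h [[H1 H2] Hh]].
    exists h. split; [split|].
    + ra. rewrite H1. apply K'.
    + ra. rewrite H2. apply K'.
    + intros x [X1 X2]. apply Hh. split.
      * rewrite <- X1. ra. rewrite K. reflexivity.
      * rewrite <- X2. ra. rewrite K. reflexivity.
  - apply weq_iso_r; auto. exists phii; auto.
  - ra. rewrite (comp_assoc phi (r) st), (comp_assoc phi (st ∘ r) y1), (comp_assoc r st y1), E1, comp_id_l. exact Hp1.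
  - ra. rewrite (comp_assoc phi (r) st), (comp_assoc phi (st ∘ r) y2), (comp_assoc r st y2), E2, comp_id_l. exact Hp1.
  - ra. rewrite (comp_assoc H (st) y1), E3. reflexivity.
  - ra. rewrite (comp_assoc H (st) y2), E4. reflexivity.
Qed.
End S.

Lemma iso_id {C : Category} (X : C) : is_iso (idm X).
Proof. exists (idm X). split; apply comp_id_l. Qed.

Theorem lemma6p3 (C : Category) (Fib Weq : MapClass C)
  (HC : is_path_category Fib Weq) (strong : bool) (Dm : MapClass C)
  (HD : display_class Fib Weq strong Dm) :
  display_class Fib Weq strong (fun X Y f => Dm X Y f \/ is_iso f).
Proof.
  destruct HD as (HDf & HDid & HDpb & HDpi).
  assert (Hfi : forall (X Y : C) (f : Hom X Y), is_iso f -> Fib _ _ f)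
    by (destruct HC as (_&H&_); exact H).
  assert (refl_Dm : forall (X I : C) (d : Hom X I), Dm _ _ d ->
            forall (D' : C) (m : Hom D' X), fhtpy Fib Weq d m m).
  { intros X I d Hd D' m.
    destruct (HDpi X I I d (idm I) Hd (HDid I)) as (Pi&PB&pi&q1&q2&eps&Hpi&_).
    assert (Hw : weak_Pi Fib Weq (idm I) d pi q1 q2 eps)
      by (destruct strong; [destruct Hpi as [Hw _]; exact Hw| exact Hpi]).
    destruct Hw as (_&[Hc Hu]&_&Hw).
    assert (Hpb : is_pullback d (idm I) (idm X) d).
    { split. rewrite comp_id_l, comp_id_r; reflexivity.
      intros D0 u v E. rewrite comp_id_l in E. exists u. split. split; [apply comp_id_l| exact E].
      intros x [X1 _]. rewrite comp_id_l in X1. symmetry; exact X1. }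
    destruct (Hw X d X (idm X) d Hpb (idm X) (comp_id_r _)) as [k [Hk1 Hk2]].
    destruct (Hu X k d) as [kB [[K1 K2] _]]. rewrite comp_id_l; exact Hk1.
    eapply fhtpy_refl. apply Hk2 with (kB := kB). rewrite comp_id_r; exact K1. exact K2. }
  split; [|split; [|split]].
  - intros X Y d [Hd|Hd]; auto.
  - intros X; left; apply HDid.
  - intros I X J d u [Hd|Hd].
    + destruct (HDpb I X J d u Hd) as (P&p1&p2&H1&H2). exists P, p1, p2. auto.
    + destruct Hd as [di [Hd1 Hd2]].
      exists J, (di ∘ u), (idm J). split; [|left; apply HDid].
      split. rewrite comp_assoc, Hd2, comp_id_l, comp_id_r; reflexivity.
      intros D0 a v E. exists v. split. split.
      * rewrite <- comp_assoc, <- E, comp_assoc, Hd1. apply comp_id_l.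
      * apply comp_id_l.
      * intros x [_ X2]. rewrite comp_id_l in X2. symmetry; exact X2.
  - intros X I J d e Hd He.
    destruct Hd as [Hd|Hd].
    2:{ destruct Hd as [di [Hd1 Hd2]].
      exists J, I, (idm J), e, (idm I), di. split; [|left; apply HDid].
      assert (Hw : weak_Pi Fib Weq e d (idm J) e (idm I) di).
      { split; [apply Hfi, iso_id|split; [|split]].
        - split. rewrite comp_id_l, comp_id_r; reflexivity.
          intros D0 u v E. rewrite comp_id_l in E. exists v. split. split; [symmetry; exact E|apply comp_id_l].
          intros x [_ X2]. rewrite comp_id_l in X2. symmetry; exact X2.
        - exact Hd2.
        - intros D0 h DB d1 d2 _ m Hm. exists h. split. apply comp_id_l.
          intros kB _ E2. rewrite comp_id_l in E2. subst kB. rewrite <- Hm, comp_assoc, Hd1, comp_id_l.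
          apply fhtpy_refl_iso; auto. exists di; auto. }
      destruct strong; [split; [exact Hw|]|exact Hw].
      intros D0 h DB d1 d2 _ k k' Hk Hk' _ _ _ _ _ _ _.
      rewrite comp_id_l in Hk, Hk'. subst. apply fhtpy_refl_iso; auto. apply iso_id. }
    destruct He as [He|He].
    { destruct (HDpi X I J d e Hd He) as (Pi&PB&pi&q1&q2&eps&H1&H2).
      exists Pi, PB, pi, q1, q2, eps. auto. }
    destruct He as [ei [He1 He2]].
    destruct (HDpb I X J d ei Hd) as (P&p1&p2&Hpb&Hp2).
    assert (Hei : is_iso ei) by (exists e; auto).
    destruct (iso_pb _ _ _ _ _ Hpb Hei) as [p1i [P1 P2]].
    assert (Ep2 : p2 = e ∘ d ∘ p1).
    { destruct Hpb as [Hc _]. rewrite <- comp_assoc, Hc, comp_assoc, He2, comp_id_l. reflexivity. }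
    exists P, P, p2, (idm P), (ei ∘ p2), p1. split; [|left; exact Hp2].
    assert (Hw : weak_Pi Fib Weq e d p2 (idm P) (ei ∘ p2) p1).
    { split; [apply HDf, Hp2|split; [|split]].
      - split. rewrite comp_id_r, comp_assoc, He2, comp_id_l; reflexivity.
        intros D0 u v E. exists u. split. split; [apply comp_id_l|].
        rewrite <- comp_assoc, E, comp_assoc, He1; apply comp_id_l.
        intros x [X1 _]. rewrite comp_id_l in X1. symmetry; exact X1.
      - destruct Hpb as [Hc _]. exact Hc.
      - intros D0 h DB d1 d2 HpbD m Hm.
        destruct (iso_pb _ _ _ _ _ HpbD (ex_intro _ ei (conj He1 He2))) as [d1i [D1 D2]].
        exists (p1i ∘ m ∘ d1i). split.
        + rewrite Ep2. ra. rewrite (comp_assoc (m ∘ d1i) p1i p1), P2, comp_id_l.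
          rewrite (comp_assoc d1i m d), Hm. destruct HpbD as [Hc _].
          rewrite comp_assoc, <- Hc, <- comp_assoc, D2. apply comp_id_r.
        + intros kB E1 _. rewrite comp_id_l in E1. subst kB.
          ra. rewrite D1, comp_id_r, comp_assoc, P2, comp_id_l. apply refl_Dm; exact Hd. }
    destruct strong; [split; [exact Hw|]|exact Hw].
    intros D0 h DB d1 d2 HpbD k k' Hk Hk' kB kB' E1 _ E1' _ Hh.
    rewrite comp_id_l in E1, E1'. subst kB kB'.
    destruct (iso_pb _ _ _ _ _ HpbD (ex_intro _ ei (conj He1 He2))) as [d1i [D1 D2]].
    apply (fhtpy_pre _ _ _ _ _ _ d1i) in Hh.
    repeat rewrite <- comp_assoc in Hh. rewrite !D2, !comp_id_r in Hh.
    rewrite <- (comp_id_l k), <- (comp_id_l k'), <- P1, <- !comp_assoc.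
    apply (fhtpy_transport _ _ _ HC d p2 p1 p1i e); auto.
    exists ei; auto.
Qed.
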